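(* There exists a symmetric noncommutative polynomial $f\in\mathbb{R}\langle x_1,x_2,x_3\rangle$ such that $f\in\mathbb{R}\langle x_1,x_2\rangle+\mathbb{R}\langle x_2,x_3\rangle$ and $f$ is a sum of hermitian squares in $\mathbb{R}\langle x_1,x_2,x_3\rangle$, but $f\notin\Sigma\langle x_1,x_2\rangle+\Sigma\langle x_2,x_3\rangle$.
   Context: $\mathbb{R}\langle x_1,\dots,x_n\rangle$ is the free real algebra of polynomials in noncommuting letters $x_1,\dots,x_n$, equipped with the involution $\star$ fixing $\mathbb{R}\cup\{x_1,\dots,x_n\}$ pointwise and reversing words; $f$ is symmetric if $f^\star=f$. A sum of hermitian squares (SOHS) is a polynomial of the form $\sum_i h_i^\star h_i$. For a subset of letters, $\mathbb{R}\langle x_i,x_j\rangle$ denotes the subalgebra of polynomials in those letters only, and $\Sigma\langle x_i,x_j\rangle$ the set of sums of hermitian squares $\sum_k h_k^\star h_k$ with all $h_k\in\mathbb{R}\langle x_i,x_j\rangle$. *)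

(* Defs.v *)
From HB Require Import structures.
From mathcomp Require Import all_boot all_order all_algebra.
From mathcomp Require Import reals.
Set Implicit Arguments. Unset Strict Implicit. Unset Printing Implicit Defensive.
Import Order.TTheory GRing.Theory Num.Theory.
Local Open Scope ring_scope.

(* Letters x_1, x_2, x_3 are the elements 0, 1, 2 of 'I_3.
   Words are sequences of letters; the empty word is the unit 1. *)
Definition word := seq 'I_3.

(* A noncommutative polynomial is given by its coefficient function on words,
   required to have finite support (equivalently, since the alphabet is finite,
   bounded degree). *)
Definition ncpoly (R : realType) := word -> R.

Definition is_ncpoly (R : realType) (f : ncpoly R) : Prop :=
  exists N : nat, forall w : word, (N < size w)%N -> f w = 0.

Definition ncmul (R : realType) (f g : ncpoly R) : ncpoly R :=
  fun w => \sum_(i < (size w).+1) f (take i w) * g (drop i w).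

(* The involution star: fixes reals and letters, reverses words. *)
Definition ncstar (R : realType) (f : ncpoly R) : ncpoly R := fun w => f (rev w).

Definition ncsymmetric (R : realType) (f : ncpoly R) : Prop :=
  forall w, ncstar f w = f w.

(* f lies in the subalgebra generated by the letters in S:
   every word in the support of f uses only letters from S. *)
Definition in_letters (R : realType) (S : pred 'I_3) (f : ncpoly R) : Prop :=
  is_ncpoly f /\ forall w : word, f w != 0 -> all S w.

Definition sohs_in (R : realType) (S : pred 'I_3) (f : ncpoly R) : Prop :=
  exists hs : seq (ncpoly R),
    (forall i : nat, (i < size hs)%N -> in_letters S (nth (fun _ => 0) hs i)) /\
    forall w, f w = \sum_(h <- hs) ncmul (ncstar h) h w.

Definition L12 : pred 'I_3 := fun i => (val i <= 1)%N.
Definition L23 : pred 'I_3 := fun i => (1 <= val i)%N.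
Definition Lall : pred 'I_3 := predT.

(* Main.v *)
Require Import Defs.
From HB Require Import structures.
From mathcomp Require Import all_boot all_order all_algebra.
From mathcomp Require Import reals.
From mathcomp Require Import zify ring.
Import Order.TTheory GRing.Theory Num.Theory.
Local Open Scope ring_scope.

Definition X1 : 'I_3 := @Ordinal 3 0 isT.
Definition X2 : 'I_3 := @Ordinal 3 1 isT.
Definition X3 : 'I_3 := @Ordinal 3 2 isT.

Definition hi1 (w : word) : int :=
  if w == [:: X1] then 1 else if w == [:: X2] then -1
  else if w == [:: X2; X3] then 1 else 0.
Definition hi2 (w : word) : int :=
  if w == [:: X2; X1] then 1 else if w == [:: X3] then -1 else 0.

Definition sqi (p : word -> int) (w : word) : int :=
  foldr (fun i acc => p (rev (take i w)) * p (drop i w) + acc) 0 (iota 0 (size w).+1).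
Definition fi w := sqi hi1 w + sqi hi2 w.

Fixpoint words_n (n : nat) : seq word :=
  if n is k.+1 then [seq i :: w | i <- [:: X1; X2; X3], w <- words_n k] else [:: [::]].
Definition allw := flatten [seq words_n k | k <- iota 0 5].

Lemma mem_letters (i : 'I_3) : i \in [:: X1; X2; X3].
Proof.
case: i => [[|[|[|m]]] Hm] //; rewrite !inE -!(inj_eq val_inj) //.
Qed.

Lemma mem_words_n w : w \in words_n (size w).
Proof.
elim: w => [|a w IH]; first by rewrite inE.
have -> : words_n (size (a :: w)) =
  [seq i :: v | i <- [:: X1; X2; X3], v <- words_n (size w)] by [].
by apply: allpairs_f; rewrite ?mem_letters ?IH.
Qed.

Lemma mem_allw w : (size w <= 4)%N -> w \in allw.
Proof.
move=> Hw; apply/flattenP; exists (words_n (size w)); last exact: mem_words_n.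
by apply/mapP; exists (size w) => //; rewrite mem_iota add0n ltnS.
Qed.

Lemma check1 : all (fun w => (fi (rev w) == fi w) &&
   ((fi w != 0) ==> (all L12 w || all L23 w))) allw.
Proof. by vm_compute. Qed.

Lemma hi1_big u : (2 < size u)%N -> hi1 u = 0.
Proof.
move=> Hu; rewrite /hi1.
case: eqP => [E|_]; first by rewrite E in Hu.
case: eqP => [E|_]; first by rewrite E in Hu.
case: eqP => [E|_]; first by rewrite E in Hu.
by [].
Qed.

Lemma hi2_big u : (2 < size u)%N -> hi2 u = 0.
Proof.
move=> Hu; rewrite /hi2.
case: eqP => [E|_]; first by rewrite E in Hu.
case: eqP => [E|_]; first by rewrite E in Hu.
by [].
Qed.

Lemma sqi_big p w : (forall u, (2 < size u)%N -> p u = 0) ->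
  (4 < size w)%N -> sqi p w = 0.
Proof.
move=> Hp Hw; rewrite /sqi.
have: all (fun i => i <= size w)%N (iota 0 (size w).+1).
  by apply/allP => i; rewrite mem_iota.
elim: (iota _ _) => [|i l IH] //= /andP [Hi Hl].
rewrite IH // addr0.
case: (leqP i 2) => Hi2.
  by rewrite (Hp (drop i w)) ?mulr0 // size_drop; lia.
by rewrite (Hp (rev (take i w))) ?mul0r // size_rev size_takel.
Qed.

Lemma fi_big w : (4 < size w)%N -> fi w = 0.
Proof.
move=> Hw; rewrite /fi !sqi_big //; [exact: hi2_big|exact: hi1_big].
Qed.

Section Real.
Variable R : realType.

Definition h1 : ncpoly R := fun w => (hi1 w)%:~R.
Definition h2 : ncpoly R := fun w => (hi2 w)%:~R.
Definition fR : ncpoly R := fun w => \sum_(h <- [:: h1; h2]) ncmul (ncstar h) h w.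

Lemma sum_foldr (F : nat -> R) n :
  \sum_(i < n) F i = foldr (fun i acc => F i + acc) 0 (iota 0 n).
Proof. by rewrite -(big_mkord xpredT) /index_iota subn0 unlock. Qed.

Lemma ncmul_int (p : word -> int) w :
  ncmul (ncstar (fun u => (p u)%:~R)) (fun u => (p u)%:~R) w = (sqi p w)%:~R :> R.
Proof.
rewrite /ncmul /ncstar /sqi.
rewrite (sum_foldr (fun i => (p (rev (take i w)))%:~R * (p (drop i w))%:~R)).
elim: (iota _ _) => [|i l IH] //=.
by rewrite IH intrD intrM.
Qed.

Lemma fRE w : fR w = (fi w)%:~R.
Proof.
by rewrite /fR big_cons big_cons big_nil addr0 /h1 /h2 !ncmul_int /fi intrD.
Qed.

Lemma fR_big w : (4 < size w)%N -> fR w = 0.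
Proof. by move=> Hw; rewrite fRE fi_big. Qed.

Lemma sumsq0 n (c : 'I_n -> R) : \sum_(i < n) c i * c i = 0 -> forall i, c i = 0.
Proof.
move=> H i.
have Hp : forall j : 'I_n, xpredT j -> 0 <= c j * c j by move=> j _; rewrite -expr2 sqr_ge0.
have := @psumr_eq0P _ _ xpredT (fun j => c j * c j) Hp H i isT.
by move=> /eqP; rewrite mulf_eq0 orbb => /eqP.
Qed.

Lemma ncmul0 (x : ncpoly R) : ncmul (ncstar x) x [::] = x [::] * x [::].
Proof. by rewrite /ncmul /ncstar big_ord_recl big_ord0 addr0. Qed.

Lemma ncmul2 (x : ncpoly R) a b : x [::] = 0 ->
  ncmul (ncstar x) x [:: a; b] = x [:: a] * x [:: b].
Proof.
move=> H0; rewrite /ncmul /ncstar /= !big_ord_recl big_ord0 /= H0.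
by rewrite mul0r mulr0 !addr0 add0r.
Qed.

Lemma ncmul3 (x : ncpoly R) a b c : x [::] = 0 ->
  ncmul (ncstar x) x [:: a; b; c] = x [:: a] * x [:: b; c] + x [:: b; a] * x [:: c].
Proof.
move=> H0; rewrite /ncmul /ncstar /= !big_ord_recl big_ord0 /= H0.
by rewrite mul0r mulr0 !addr0 add0r.
Qed.

Lemma ncmul4 (x : ncpoly R) a b c d : x [::] = 0 ->
  ncmul (ncstar x) x [:: a; b; c; d] =
  x [:: a] * x [:: b; c; d] + x [:: b; a] * x [:: c; d] + x [:: c; b; a] * x [:: d].
Proof.
move=> H0; rewrite /ncmul /ncstar /= !big_ord_recl big_ord0 /= H0.
by rewrite mul0r mulr0 !addr0 add0r !addrA.
Qed.

Lemma ncmul_sq (x : ncpoly R) u :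
  (forall v, (size u < size v)%N -> x v = 0) ->
  ncmul (ncstar x) x (rev u ++ u) = x u * x u.
Proof.
move=> Hx; rewrite /ncmul /ncstar.
have Hs : size (rev u ++ u) = (size u + size u)%N by rewrite size_cat size_rev.
have Hk : (size u < (size (rev u ++ u)).+1)%N by rewrite Hs; lia.
rewrite (bigD1 (Ordinal Hk)) //= take_size_cat ?size_rev // revK drop_size_cat ?size_rev //.
rewrite big1 ?addr0 // => j /eqP Hj.
have Hj' : nat_of_ord j != size u by apply/eqP => E; apply: Hj; apply: val_inj.
have Hjs := ltn_ord j.
case: (ltngtP j (size u)) => Hju.
- by rewrite (Hx (drop j _)) ?mulr0 // size_drop; lia.
- rewrite (Hx (rev (take j _))) ?mul0r // size_rev size_takel //; lia.
- by rewrite Hju eqxx in Hj'.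
Qed.

Lemma bound_family n (H : nat -> ncpoly R) :
  (forall i, (i < n)%N -> is_ncpoly (H i)) ->
  exists N, forall i, (i < n)%N -> forall u, (N < size u)%N -> H i u = 0.
Proof.
elim: n => [|n IH] Hp; first by exists 0%N.
have [N1 HN1] : exists N, forall i, (i < n)%N -> forall u, (N < size u)%N -> H i u = 0.
  by apply: IH => i Hi; apply: Hp; lia.
have [N2 HN2] := Hp n (ltnSn n).
exists (maxn N1 N2) => i Hi u Hu.
case: (ltngtP i n) => Hin.
- by apply: HN1 => //; lia.
- lia.
- by rewrite Hin; apply: HN2; lia.
Qed.

Lemma deg_bound n (H : nat -> ncpoly R) :
  (forall i, (i < n)%N -> is_ncpoly (H i)) ->
  (forall w, (4 < size w)%N -> \sum_(i < n) ncmul (ncstar (H i)) (H i) w = 0) ->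
  forall i, (i < n)%N -> forall u, (2 < size u)%N -> H i u = 0.
Proof.
move=> Hp Hz.
have [N HN] := @bound_family n H Hp.
pose P k := forall i, (i < n)%N -> forall u, (k < size u)%N -> H i u = 0.
have step : forall k, (2 <= k)%N -> P k.+1 -> P k.
  move=> k Hk Pk.
  have Hsq : forall v, size v = k.+1 -> forall j, (j < n)%N -> H j v = 0.
    move=> v Hv j Hj.
    have := Hz (rev v ++ v); rewrite size_cat size_rev Hv => /(_ ltac:(lia)).
    have Hrew : forall i : 'I_n, ncmul (ncstar (H i)) (H i) (rev v ++ v) = H i v * H i v.
      move=> i; apply: ncmul_sq => v' Hv'; apply: Pk => //; rewrite -Hv //.
    under eq_bigr => i _ do rewrite Hrew.
    by move=> /sumsq0 /(_ (Ordinal Hj)).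
  move=> i Hi u; rewrite leq_eqVlt => /orP [/eqP Hu|Hu].
    by apply: Hsq.
  by apply: Pk.
have ind : forall d k, (k + d)%N = N -> (2 <= k)%N -> P k.
  elim=> [|d IHd] k Hkd Hk.
    by rewrite addn0 in Hkd; rewrite Hkd.
  apply: step => //; apply: IHd => //; lia.
case: (leqP 2 N) => HN2.
  apply: (ind (N - 2)%N 2%N) => //; lia.
move=> i Hi u Hu; apply: HN => //; lia.
Qed.

Lemma vanish (x : ncpoly R) (S : pred 'I_3) :
  (forall w, x w != 0 -> all S w) -> forall w, ~~ all S w -> x w = 0.
Proof.
move=> Hx w Hw; apply/eqP/negPn/negP => /Hx.
by rewrite (negbTE Hw).
Qed.

End Real.

Theorem lemma6p2 (R : realType) :
  exists f : ncpoly R,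
    is_ncpoly f /\ ncsymmetric f /\
    (exists g h : ncpoly R, in_letters L12 g /\ in_letters L23 h /\
        forall w, f w = g w + h w) /\
    sohs_in Lall f /\
    ~ (exists g h : ncpoly R, sohs_in L12 g /\ sohs_in L23 h /\
        forall w, f w = g w + h w).
Proof.
have Hpoly : is_ncpoly (fR R) by exists 4%N => w Hw; exact: fR_big.
have Hchk : forall w, (size w <= 4)%N ->
   (fi (rev w) == fi w) && ((fi w != 0) ==> (all L12 w || all L23 w)).
  by move=> w Hw; have := allP check1 w (mem_allw w Hw).
exists (fR R); split; first exact: Hpoly.
split.
  move=> w; rewrite /ncstar !fRE; congr intr.
  case: (leqP (size w) 4) => Hw.
    by have /andP [/eqP -> _] := Hchk w Hw.
  by rewrite !fi_big ?size_rev.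
split.
  exists (fun w => if all L12 w then fR R w else 0).
  exists (fun w => if all L12 w then 0 else fR R w).
  split.
    split; first by exists 4%N => w Hw; rewrite fR_big // if_same.
    by move=> w; case: ifP => //; rewrite eqxx.
  split.
    split; first by exists 4%N => w Hw; rewrite fR_big // if_same.
    move=> w; case: ifP => HL; first by rewrite eqxx.
    rewrite fRE intr_eq0 => Hf.
    case: (leqP (size w) 4) => Hw.
      by have /andP [_ /implyP /(_ Hf)] := Hchk w Hw; rewrite HL.
    by rewrite fi_big ?eqxx in Hf.
  by move=> w; case: ifP; rewrite ?addr0 ?add0r.
split.
  exists [:: h1 R; h2 R]; split; last by [].
  case=> [|[|i]] //= _; (split; last by move=> w _; rewrite /Lall all_predT).
    by exists 2%N => w Hw; rewrite /h1 hi1_big.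
  by exists 2%N => w Hw; rewrite /h2 hi2_big.
move=> [g [h [[hsA [HA EA]] [[hsB [HB EB]] Efgh]]]].
pose hs := hsA ++ hsB.
pose n := size hs.
pose H i := nth (fun _ => 0) hs i.
have S : forall w, fR R w = \sum_(i < n) ncmul (ncstar (H i)) (H i) w.
  move=> w; rewrite Efgh EA EB -big_cat (big_nth (fun _ => 0)) big_mkord //.
have Q : forall i, (i < n)%N -> is_ncpoly (H i) /\
    ((forall w, H i w != 0 -> all L12 w) \/ (forall w, H i w != 0 -> all L23 w)).
  move=> i Hi; rewrite /H nth_cat; case: ltnP => Hi'.
    by have [P1 P2] := HA i Hi'; split => //; left.
  have Hi2 : (i - size hsA < size hsB)%N.
    by move: Hi Hi'; rewrite /n /hs size_cat => H1 H2; rewrite ltn_subLR.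
  by have [P1 P2] := HB _ Hi2; split => //; right.
have Hdeg := @deg_bound R n H (fun i Hi => (Q i Hi).1)
   (fun w Hw => etrans (esym (S w)) (@fR_big R w Hw)).
have H0 : forall i : 'I_n, H i [::] = 0.
  apply: sumsq0; under eq_bigr => i _ do rewrite -ncmul0.
  by rewrite -S fRE.
have E11 : \sum_(i < n) H i [:: X1] * H i [:: X1] = 1.
  under eq_bigr => i _ do rewrite -ncmul2 //.
  by rewrite -S fRE.
have E22 : \sum_(i < n) H i [:: X2] * H i [:: X2] = 1.
  under eq_bigr => i _ do rewrite -ncmul2 //.
  by rewrite -S fRE.
have E12 : \sum_(i < n) H i [:: X1] * H i [:: X2] = -1.
  under eq_bigr => i _ do rewrite -ncmul2 //.
  by rewrite -S fRE.
have E0 : forall i : 'I_n, H i [:: X1] + H i [:: X2] = 0.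
  apply: sumsq0.
  have -> : \sum_(i < n) (H i [:: X1] + H i [:: X2]) * (H i [:: X1] + H i [:: X2])
     = \sum_(i < n) H i [:: X1] * H i [:: X1] + \sum_(i < n) H i [:: X2] * H i [:: X2]
       + 2 * \sum_(i < n) H i [:: X1] * H i [:: X2].
    rewrite mulr_sumr -!big_split; apply: eq_bigr => i _ /=; ring.
  rewrite E11 E22 E12; ring.
have E2222 : forall i : 'I_n, H i [:: X2; X2] = 0.
  apply: sumsq0.
  have := S [:: X2; X2; X2; X2]; rewrite fRE.
  have -> : fi [:: X2; X2; X2; X2] = 0 by vm_compute.
  under eq_bigr => i _ do rewrite ncmul4 // !(Hdeg i (ltn_ord i) [:: _; _; _]) //
     mulr0 mul0r add0r addr0.
  by move=> <-.
have := S [:: X2; X2; X3]; rewrite fRE.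
have -> : fi [:: X2; X2; X3] = -1 by vm_compute.
under eq_bigr => i _ do rewrite ncmul3 // E2222 mul0r addr0.
rewrite big1.
  by move/eqP; rewrite intr_eq0.
move=> i _.
have [_ [HL|HL]] := Q i (ltn_ord i).
  by rewrite (@vanish R _ _ HL [:: X2; X3]) ?mulr0.
have : H i [:: X2] = 0.
  have := E0 i; rewrite (@vanish R _ _ HL [:: X1]) // add0r //.
by move=> ->; rewrite mul0r.
Qed.
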